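(* Let $f_1,f_2:\mathbb R^d\to\mathbb R$ be convex with $\nabla f_i$ globally Lipschitz continuous with modulus $L_i>0$ ($i=1,2$), let $f_3:\mathbb R^d\to\mathbb R\cup\{+\infty\}$ be proper and lower semicontinuous, and assume $\varphi:=f_1+f_2+f_3$ has a nonempty set of minimizers. Let $\gamma\in(0,\frac{1}{L_1+L_2})$ and $\lambda,\alpha>0$. Given $(z_1,z_2)\in\mathbb R^d\times\mathbb R^d$, let $x_1=\mathrm{prox}_{\gamma f_1}(z_1)$, $x_2=\mathrm{prox}_{\frac{\gamma}{\alpha}f_2}(\frac{z_2}{\alpha}+x_1)$ and $x_3\in\mathrm{prox}_{\gamma f_3}(x_1-z_1+x_2-z_2)$. Then: (i) with $\gamma_1=\gamma/\alpha$ and $\gamma_2=\gamma/(1-\alpha)$, $$\varphi_\gamma^{\mathrm{Ryu}}(z_1,z_2)\le\min\Big\{\varphi(x_1)+\tfrac12\big(L_2+\tfrac{1}{\gamma_2}\big)\|x_1-x_2\|^2,\ \varphi(x_2)+\tfrac12\big(L_1+\tfrac{1}{\gamma_1}\big)\|x_1-x_2\|^2\Big\};$$ (ii) $\varphi_\gamma^{\mathrm{Ryu}}(z_1,z_2)\ge\varphi(x_3)+\frac{\alpha-\gamma L_1}{2\gamma}\|x_3-x_1\|^2+\frac{(1-\alpha)-\gamma L_2}{2\gamma}\|x_3-x_2\|^2$; (iii) if $\alpha\in(0,1)$ and $\gamma\le\min\{\frac{\alpha}{L_1},\frac{1-\alpha}{L_2}\}$, then $\varphi_\gamma^{\mathr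m{Ryu}}(z_1,z_2)\ge\varphi(x_3)$.
   Context: For $h:\mathbb R^d\to\mathbb R\cup\{+\infty\}$ and $\gamma>0$, $\mathrm{prox}_{\gamma h}(z):=\operatorname{argmin}_{y}\{h(y)+\frac{1}{2\gamma}\|y-z\|^2\}$. Conventions $\frac{c}{0}=\infty$, $\frac{d}{\infty}=0$ ($c>0,d\in\mathbb R$). With $x_1,x_2$ as in the claim and $\gamma_1=\gamma/\alpha$, $\gamma_2=\gamma/(1-\alpha)$, the relaxed Ryu envelope is $$\varphi_\gamma^{\mathrm{Ryu}}(z_1,z_2):=\min_{y\in\mathbb R^d}\Big\{f_3(y)+\sum_{i=1}^2\Big[f_i(x_i)+\langle y-x_i,\nabla f_i(x_i)\rangle+\frac{1}{2\gamma_i}\|y-x_i\|^2\Big]\Big\}.$$ *)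

(* Defs.v *)
From HB Require Import structures.
From mathcomp Require Import all_boot all_order all_algebra.
From mathcomp Require Import all_classical all_reals all_analysis.
Set Implicit Arguments. Unset Strict Implicit. Unset Printing Implicit Defensive.
Import Order.TTheory GRing.Theory Num.Theory.
Import numFieldNormedType.Exports.
Local Open Scope ring_scope.

Section Defs.
Variables (R : realType) (d : nat).
Implicit Types (x y z : 'rV[R]_d).

Definition dotp x y : R := \sum_(i < d) x ord0 i * y ord0 i.
Definition sqnorm x : R := dotp x x.
Definition enorm x : R := Num.sqrt (sqnorm x).

Definition convex_fun (f : 'rV[R]_d -> R) :=
  forall x y (t : R), 0 <= t -> t <= 1 ->
    f (t *: x + (1 - t) *: y) <= t * f x + (1 - t) * f y.

Definition is_gradient (f : 'rV[R]_d -> R) (g : 'rV[R]_d -> 'rV[R]_d) :=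
  forall x, differentiable f x /\ forall v, 'd f x v = dotp (g x) v.

Definition lipschitz_mod (g : 'rV[R]_d -> 'rV[R]_d) (L : R) :=
  forall x y, enorm (g x - g y) <= L * enorm (x - y).

Definition proper_fun (h : 'rV[R]_d -> \bar R) :=
  (exists x, h x < +oo)%E /\ (forall x, -oo < h x)%E.

Definition is_prox (h : 'rV[R]_d -> \bar R) (gamma : R) z x :=
  forall y, (h x + ((2 * gamma)^-1 * sqnorm (x - z))%:E
             <= h y + ((2 * gamma)^-1 * sqnorm (y - z))%:E)%E.

(* relaxed Ryu envelope; coefficient 1/(2 gamma_1) = alpha/(2 gamma),
   1/(2 gamma_2) = (1-alpha)/(2 gamma) (with the convention 1/oo = 0) *)
Definition ryu_env (f1 f2 : 'rV[R]_d -> R) (g1 g2 : 'rV[R]_d -> 'rV[R]_d)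
  (f3 : 'rV[R]_d -> \bar R) (gamma alpha : R) (x1 x2 : 'rV[R]_d) : \bar R :=
  ereal_inf (range (fun y => (f3 y +
     (f1 x1 + dotp (y - x1) (g1 x1) + alpha / (2 * gamma) * sqnorm (y - x1)
    + (f2 x2 + dotp (y - x2) (g2 x2)
       + (1 - alpha) / (2 * gamma) * sqnorm (y - x2)))%:E)%E)).

End Defs.

(* Main.v *)
Require Import Defs.
From HB Require Import structures.
From mathcomp Require Import all_boot all_order all_algebra.
From mathcomp Require Import all_classical all_reals all_analysis.
From mathcomp Require Import ring lra.
Import Order.TTheory GRing.Theory Num.Theory.
Import numFieldNormedType.Exports.
Local Open Scope ring_scope.

Section Aux.
Variables (R : realType) (d : nat).
Implicit Types (x y z u v : 'rV[R]_d).

Lemma sqnorm_ge0 x : 0 <= sqnorm x.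
Proof. by rewrite /sqnorm /dotp; apply: sumr_ge0 => i _; rewrite -expr2 sqr_ge0. Qed.

Lemma sqnorm_eq0 x : sqnorm x = 0 -> x = 0.
Proof.
rewrite /sqnorm /dotp => /eqP; rewrite psumr_eq0; last by move=> i _; rewrite -expr2 sqr_ge0.
move=> /allP H; apply/matrixP => i j; rewrite (ord1 i) mxE.
have := H j (mem_index_enum _); rewrite /= mulf_eq0 orbb => /eqP //.
Qed.

Lemma line_derive (f : 'rV[R]_d -> R) g x u (t : R) : is_gradient f g ->
  is_derive t 1 (fun s : R => f (x + s *: u)) (dotp (g (x + t *: u)) u).
Proof.
move=> hg; have [df dv] := hg (x + t *: u).
have E : (fun h : R => h^-1 *: (((fun s : R => f (x + s *: u)) \o shift t) (h *: 1) - f (x + t *: u))) =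
   (fun h : R => h^-1 *: ((f \o shift (x + t *: u)) (h *: u) - f (x + t *: u))).
  apply/funext => h /=; congr (_ *: (f _ - _)).
  by rewrite [h *: 1]mulr1 scalerDl addrCA addrA.
have dr : derivable f (x + t *: u) u by exact: diff_derivable.
apply: DeriveDef.
  by rewrite /derivable E.
by rewrite /derive E -/(derive f _ u) deriveE // dv.
Qed.

Lemma right_deriv_le (h : R -> R) (D c e : R) : is_derive (0:R) (1:R) h D ->
  (forall t, 0 < t < 1 -> h t <= h 0 + t * c + t ^+ 2 * e) -> D <= c.
Proof.
move=> hd hle.
have dfc : derivable h 0 1 by case: hd.
rewrite -(@derive_val _ _ _ _ _ _ _ hd).
apply/ler_addgt0Pr => eps eps0.
rewrite ['D_1 h 0]cvg_at_rightE; last exact: dfc.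
apply: limr_le.
  rewrite -(cvg_at_rightE (fun t : R => t^-1 *: ((h \o shift 0) _ - h 0))) //.
  apply: cvg_trans dfc; apply: cvg_app.
  move=> A [r rgt0 Ar]; exists r => // x xe xgt0; apply: Ar => //.
  exact/lt0r_neq0.
near=> t.
have t0 : 0 < t by near: t; exists 1 => /=.
have [t1 te] : t < 1 /\ t * e <= eps.
  near: t; exists (Num.min 1 (eps / (`|e| + 1))).
    by rewrite /= lt_min ltr01 /= divr_gt0 // ltr_pwDr // normr_ge0.
  move=> s /= /[swap] s0; rewrite distrC subr0 gtr0_norm // lt_min => /andP[s1 se].
  split => //; apply: (le_trans (ler_norm _)); rewrite normrM gtr0_norm //.
  rewrite (le_trans (y := s * (`|e| + 1))) //.
    by rewrite ler_pM2l // lerDl.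
  by rewrite -ler_pdivlMr ?ltW // ltr_pwDr // normr_ge0.
rewrite /= addr0 [t%:A]mulr1 -[_ *: _]/(_ * _) mulrC ler_pdivrMr //.
have := hle t; rewrite t0 t1 => /(_ isT) H.
have : t * (t * e) <= t * eps by rewrite ler_pM2l.
rewrite mulrA -expr2; lra.
Unshelve. all: by end_near. Qed.

Ltac coord := rewrite /sqnorm /dotp ?mulr_sumr -?sumrN -?big_split /=;
  apply: eq_bigr => i _; rewrite !mxE; ring.

Lemma sq_expand x z v (t : R) : sqnorm (x + t *: v - z) =
  sqnorm (x - z) + 2 * t * dotp (x - z) v + t ^+ 2 * sqnorm v.
Proof. coord. Qed.

Lemma sq_lin x y (s r : R) : sqnorm (s *: x - r *: y) =
  s ^+ 2 * sqnorm x - 2 * s * r * dotp x y + r ^+ 2 * sqnorm y.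
Proof. coord. Qed.

Lemma dotpN x y : dotp x (- y) = - dotp x y.
Proof. coord. Qed.

Lemma dotp_sym x y : dotp x y = dotp y x.
Proof. by rewrite /dotp; apply: eq_bigr => i _; rewrite mulrC. Qed.

Lemma dotpBl x y z : dotp (x - y) z = dotp x z - dotp y z.
Proof. coord. Qed.

Lemma grad_ineq (f : 'rV[R]_d -> R) g x y : convex_fun f -> is_gradient f g ->
  f x + dotp (g x) (y - x) <= f y.
Proof.
move=> hc hg.
have hd := line_derive f g x (y - x) 0 hg.
rewrite scale0r addr0 in hd.
suff : dotp (g x) (y - x) <= f y - f x by lra.
apply: (@right_deriv_le _ _ _ 0 hd) => t /andP[t0 t1].
rewrite scale0r addr0 expr2 !mulr0 addr0.
have := hc y x t (ltW t0) (ltW t1).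
have -> : t *: y + (1 - t) *: x = x + t *: (y - x).
  apply/matrixP => i j; rewrite !mxE; ring.
lra.
Qed.

Lemma prox_grad (f : 'rV[R]_d -> R) g (gam : R) z x : 0 < gam -> is_gradient f g ->
  is_prox (fun x => (f x)%:E) gam z x -> g x = gam^-1 *: (z - x).
Proof.
move=> g0 hg hp.
have key v : - dotp (g x) v <= gam^-1 * dotp (x - z) v.
  have hd := is_deriveN (line_derive f g x v 0 hg).
  rewrite scale0r addr0 in hd.
  apply: (@right_deriv_le _ _ _ ((2 * gam)^-1 * sqnorm v) hd) => t /andP[t0 t1] /=.
  have -> : (- (fun s : R => f (x + s *: v))) = (fun s => - f (x + s *: v)) by [].
  rewrite /= scale0r addr0.
  have := hp (x + t *: v); rewrite -!EFinD lee_fin sq_expand.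
  rewrite invfM.
  set A := sqnorm (x - z); set P := dotp (x - z) v; set B := sqnorm v.
  have gi : 0 < gam^-1 by rewrite invr_gt0.
  move=> H.
  have E : (gam^-1 / 2) * (2 * t * P + t ^+ 2 * B) = t * (gam^-1 * P) + t ^+ 2 * (2^-1 * gam^-1 * B).
    by field; rewrite gt_eqF.
  nra.
set a := g x - gam^-1 *: (z - x).
have da v : dotp a v = dotp (g x) v + gam^-1 * dotp (x - z) v by rewrite /a; coord.
have a0 : sqnorm a = 0.
  apply/eqP; rewrite eq_le; apply/andP; split; last exact: sqnorm_ge0.
  have := key (- a); rewrite /sqnorm da !dotpN; lra.
by apply/eqP; rewrite -subr_eq0; apply/eqP; exact: sqnorm_eq0.
Qed.

Lemma dotp0l y : dotp 0 y = 0.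
Proof. by rewrite /dotp big1 // => i _; rewrite mxE mul0r. Qed.

Lemma cs (a b : 'rV[R]_d) : dotp a b <= enorm a * enorm b.
Proof.
rewrite /enorm.
have A0 := sqnorm_ge0 a; have B0 := sqnorm_ge0 b.
set A := sqnorm a in A0 *; set B := sqnorm b in B0 *.
have sa0 : 0 <= Num.sqrt A by exact: sqrtr_ge0.
have sb0 : 0 <= Num.sqrt B by exact: sqrtr_ge0.
have sA : Num.sqrt A ^+ 2 = A by rewrite sqr_sqrtr.
have sB : Num.sqrt B ^+ 2 = B by rewrite sqr_sqrtr.
have H := sqnorm_ge0 (Num.sqrt B *: a - Num.sqrt A *: b); rewrite sq_lin -/A -/B in H.
have [sa_eq|sa_ne] := eqVneq (Num.sqrt A) 0.
  have : A = 0 by rewrite -sA sa_eq expr2 mulr0.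
  move/sqnorm_eq0 => ->; rewrite dotp0l sa_eq mul0r //.
have [sb_eq|sb_ne] := eqVneq (Num.sqrt B) 0.
  have : B = 0 by rewrite -sB sb_eq expr2 mulr0.
  move/sqnorm_eq0 => ->; rewrite dotp_sym dotp0l sb_eq mulr0 //.
have pos : 0 < Num.sqrt A * Num.sqrt B by rewrite mulr_gt0 // lt0r ?sa_ne ?sb_ne.
set P := dotp a b in H *.
set x := Num.sqrt A in H pos sA *; set y := Num.sqrt B in H pos sB *.
rewrite sA sB in H.
have xy : (x * y) ^+ 2 = A * B by rewrite exprMn sA sB.
have : 0 <= 2 * (x * y) * (x * y - P).
  have -> : 2 * (x * y) * (x * y - P) = 2 * (x * y) ^+ 2 - 2 * y * x * P by ring.
  rewrite xy; lra.
rewrite pmulr_rge0 ?subr_ge0 //; last by rewrite mulr_gt0.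
Qed.

Lemma enormZ (c : R) u : 0 <= c -> enorm (c *: u) = c * enorm u.
Proof.
move=> c0; rewrite /enorm.
have -> : sqnorm (c *: u) = c ^+ 2 * sqnorm u by coord.
by rewrite sqrtrM ?sqr_ge0 // sqrtr_sqr ger0_norm.
Qed.

Lemma enorm_sq u : enorm u * enorm u = sqnorm u.
Proof. by rewrite /enorm -expr2 sqr_sqrtr // sqnorm_ge0. Qed.

Lemma descent (f : 'rV[R]_d -> R) g (L : R) x y : is_gradient f g -> lipschitz_mod g L ->
  0 <= L -> f y <= f x + dotp (g x) (y - x) + L / 2 * sqnorm (y - x).
Proof.
move=> hg hl L0.
set u := y - x; set k1 := dotp (g x) u; set k2 := L / 2 * sqnorm u.
pose F := fun s : R => f (x + s *: u).
pose phi : R -> R := F - k1 \*: (@id R) - k2 \*: (((@id R) : R -> R) * (@id R)).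

pose dphi := fun s : R => dotp (g (x + s *: u)) u - k1 - k2 * (s + s).
have hd (s : R) : is_derive s 1 phi (dphi s).
  have h1 : is_derive s 1 F (dotp (g (x + s *: u)) u) := line_derive f g x u s hg.
  have h2 : is_derive s 1 (k1 \*: (@id R)) (k1 *: 1) := is_deriveZ k1 (is_derive_id _ _).
  have h3 : is_derive s 1 (((@id R) : R -> R) * (@id R)) (s *: 1 + s *: 1) :=
    is_deriveM (is_derive_id _ _) (is_derive_id _ _).
  have h4 := is_deriveZ k2 h3.
  have := is_deriveB (is_deriveB h1 h2) h4.
  move/is_derive_eq; apply.
  by rewrite /dphi /= ![_%:A]mulr1.
have cont := @derivable_within_continuous R R phi `[0, 1] (fun s _ => @ex_derive _ _ _ _ _ _ _ (hd s)).
have [c /andP[c0 c1] E] := MVT ltr01 (fun s _ => hd s) cont.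
have dc : dphi c <= 0.
  rewrite /dphi /k2.
  have := cs (g (x + c *: u) - g x) u; rewrite dotpBl -/k1.
  have := hl (x + c *: u) x.
  have -> : x + c *: u - x = c *: u by rewrite addrAC subrr add0r.
  rewrite enormZ; last exact: ltW c0.
  move=> la.
  have eu := enorm_sq u; have e0 : 0 <= enorm u by exact: sqrtr_ge0.
  have : enorm (g (x + c *: u) - g x) * enorm u <= L * (c * enorm u) * enorm u by rewrite ler_wpM2r.
  have -> : L * (c * enorm u) * enorm u = L * c * (enorm u * enorm u) by ring.
  rewrite eu.
  nra.
have P1 : phi 1 = F 1 - k1 * 1 - k2 * (1 * 1) by [].
have P0 : phi 0 = F 0 - k1 * 0 - k2 * (0 * 0) by [].
have F1 : F 1 = f y by rewrite /F scale1r /u addrC subrK.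
have F0 : F 0 = f x by rewrite /F scale0r addr0.
move: E; rewrite P1 P0 F1 F0.
have := dc; lra.
Qed.
End Aux.

Theorem proposition3 (R : realType) (d : nat)
  (f1 f2 : 'rV[R]_d -> R) (g1 g2 : 'rV[R]_d -> 'rV[R]_d)
  (f3 : 'rV[R]_d -> \bar R) (L1 L2 : R)
  (hf1 : convex_fun f1) (hf2 : convex_fun f2)
  (hg1 : is_gradient f1 g1) (hg2 : is_gradient f2 g2)
  (hL1 : 0 < L1) (hL2 : 0 < L2)
  (hLip1 : lipschitz_mod g1 L1) (hLip2 : lipschitz_mod g2 L2)
  (hf3p : proper_fun f3) (hf3l : lower_semicontinuous f3)
  (hmin : exists xs : 'rV[R]_d, forall y : 'rV[R]_d,
      ((f1 xs + f2 xs)%:E + f3 xs <= (f1 y + f2 y)%:E + f3 y)%E)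
  (gamma lambda alpha : R)
  (hgam : 0 < gamma) (hgamL : gamma < (L1 + L2)^-1)
  (hlam : 0 < lambda) (halp : 0 < alpha)
  (z1 z2 x1 x2 x3 : 'rV[R]_d)
  (hx1 : is_prox (fun x => (f1 x)%:E) gamma z1 x1)
  (hx2 : is_prox (fun x => (f2 x)%:E) (gamma / alpha) (alpha^-1 *: z2 + x1) x2)
  (hx3 : is_prox f3 gamma (x1 - z1 + x2 - z2) x3) :
  let phi := fun x => ((f1 x + f2 x)%:E + f3 x)%E in
  let env := ryu_env f1 f2 g1 g2 f3 gamma alpha x1 x2 in
  (* (i) *)
  (env <= mine (phi x1 + (2^-1 * (L2 + (1 - alpha) / gamma) * sqnorm (x1 - x2))%:E)
               (phi x2 + (2^-1 * (L1 + alpha / gamma) * sqnorm (x1 - x2))%:E))%E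
  (* (ii) *)
  /\ (phi x3 + ((alpha - gamma * L1) / (2 * gamma) * sqnorm (x3 - x1)
      + ((1 - alpha) - gamma * L2) / (2 * gamma) * sqnorm (x3 - x2))%:E <= env)%E
  (* (iii) *)
  /\ (0 < alpha < 1 -> gamma <= Num.min (alpha / L1) ((1 - alpha) / L2) ->
      (phi x3 <= env)%E).
Proof.
move=> phi env.
have gn : gamma != 0 by rewrite gt_eqF.
have an : alpha != 0 by rewrite gt_eqF.
have G1 := @prox_grad _ _ _ _ _ _ _ hgam hg1 hx1.
have G2 := @prox_grad _ _ _ _ _ _ _ (divr_gt0 hgam halp) hg2 hx2.
set Q := fun y => f1 x1 + dotp (y - x1) (g1 x1) + alpha / (2 * gamma) * sqnorm (y - x1)
    + (f2 x2 + dotp (y - x2) (g2 x2) + (1 - alpha) / (2 * gamma) * sqnorm (y - x2)).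
set w := x1 - z1 + x2 - z2.
set s := fun y => (2 * gamma)^-1 * sqnorm (y - w).
have envE : env = ereal_inf (range (fun y => (f3 y + (Q y)%:E)%E)) by [].
have T y : dotp (y - x1) (g1 x1) + alpha / (2 * gamma) * sqnorm (y - x1)
    + dotp (y - x2) (g2 x2) + (1 - alpha) / (2 * gamma) * sqnorm (y - x2) - s y =
    dotp (x3 - x1) (g1 x1) + alpha / (2 * gamma) * sqnorm (x3 - x1)
    + dotp (x3 - x2) (g2 x2) + (1 - alpha) / (2 * gamma) * sqnorm (x3 - x2) - s x3.
  rewrite /s G1 G2 /sqnorm /dotp ?mulr_sumr -?sumrN -?big_split /=.
  apply: eq_bigr => i _; rewrite !mxE.
  by field; rewrite gn an.
have VQ y : (f3 x3 + (Q x3)%:E <= f3 y + (Q y)%:E)%E.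
  have := hx3 y; rewrite -/w => H.
  have E z : (f3 z + (Q z)%:E = (f3 z + (s z)%:E) + (Q z - s z)%:E)%E.
    by rewrite -addeA -EFinD; congr (_ + _)%E; congr (_%:E); ring.
  rewrite (E y) (E x3).
  have -> : Q y - s y = Q x3 - s x3.
    have := T y; rewrite /Q; lra.
  exact: leeD2r.
have sqs (a b : 'rV[R]_d) : sqnorm (a - b) = sqnorm (b - a).
  by rewrite /sqnorm /dotp; apply: eq_bigr => i _; rewrite !mxE; ring.
have sq0 : sqnorm (0 : 'rV[R]_d) = 0 by rewrite /sqnorm dotp0l.
have Lpos : 0 <= L1 /\ 0 <= L2 by split; apply: ltW.
have sqp := @sqnorm_ge0 R d.
have phiE z k : (phi z + k%:E = f3 z + (f1 z + f2 z + k)%:E)%E.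
  by rewrite /phi addeAC addeC -EFinD.
have II : (phi x3 + ((alpha - gamma * L1) / (2 * gamma) * sqnorm (x3 - x1)
      + ((1 - alpha) - gamma * L2) / (2 * gamma) * sqnorm (x3 - x2))%:E <= env)%E.
  rewrite envE; apply: le_ereal_inf_tmp => _ [y _ <-].
  apply: le_trans (VQ y).
  rewrite phiE; apply: leeD2l; rewrite lee_fin /Q.
  have D1 := @descent _ _ _ _ _ x1 x3 hg1 hLip1 (ltW hL1).
  have D2 := @descent _ _ _ _ _ x2 x3 hg2 hLip2 (ltW hL2).
  rewrite (@dotp_sym _ _ (x3 - x1)) (@dotp_sym _ _ (x3 - x2)).
  have -> : (alpha - gamma * L1) / (2 * gamma) * sqnorm (x3 - x1) =
    alpha / (2 * gamma) * sqnorm (x3 - x1) - L1 / 2 * sqnorm (x3 - x1) by field.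
  have -> : (1 - alpha - gamma * L2) / (2 * gamma) * sqnorm (x3 - x2) =
    (1 - alpha) / (2 * gamma) * sqnorm (x3 - x2) - L2 / 2 * sqnorm (x3 - x2) by field.
  lra.
split; [|split].
- rewrite le_min; apply/andP; split.
  + apply: (le_trans (y := (f3 x1 + (Q x1)%:E)%E)).
      by rewrite envE; apply: ereal_inf_lbound; exists x1.
    rewrite phiE; apply: leeD2l; rewrite lee_fin /Q subrr dotp0l sq0.
    have := @grad_ineq _ _ _ _ x2 x1 hf2 hg2; rewrite dotp_sym.
    have := sqp (x1 - x2).
    have -> : 2^-1 * (L2 + (1 - alpha) / gamma) * sqnorm (x1 - x2) =
       2^-1 * L2 * sqnorm (x1 - x2) + (1 - alpha) / (2 * gamma) * sqnorm (x1 - x2).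
      by field.
    have : 0 <= L2 * sqnorm (x1 - x2) by rewrite mulr_ge0 // ltW.
    lra.
  + apply: (le_trans (y := (f3 x2 + (Q x2)%:E)%E)).
      by rewrite envE; apply: ereal_inf_lbound; exists x2.
    rewrite phiE; apply: leeD2l; rewrite lee_fin /Q subrr dotp0l sq0.
    have := @grad_ineq _ _ _ _ x1 x2 hf1 hg1; rewrite dotp_sym.
    have -> : 2^-1 * (L1 + alpha / gamma) * sqnorm (x1 - x2) =
       2^-1 * L1 * sqnorm (x2 - x1) + alpha / (2 * gamma) * sqnorm (x2 - x1).
      by rewrite (sqs x1 x2); field.
    have : 0 <= L1 * sqnorm (x2 - x1) by rewrite mulr_ge0 // ltW.
    lra.
- exact: II.
- move=> /andP[a0 a1]; rewrite le_min => /andP[m1 m2].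
  apply: le_trans II; apply: leeDl; rewrite lee_fin.
  rewrite ler_pdivlMr // in m1; rewrite ler_pdivlMr // in m2.
  apply: addr_ge0; apply: mulr_ge0 => //; apply: divr_ge0; rewrite ?subr_ge0 //;
    apply: mulr_ge0 => //; exact: ltW.
Qed.
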